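(* Let $(R,\mathfrak{m},k)$ be a commutative Noetherian local ring and let $\mathbf{F}$ be a minimal free resolution of $k$ over $R$. Then $\mathfrak{m}^*\operatorname{H}_n(\operatorname{lin}^R(\mathbf{F}))=0$ for all $n$, where $\mathfrak{m}^*$ is the homogeneous maximal ideal of $R^{\mathsf g}$.
   Context: $R^{\mathsf g}=\bigoplus_{i\ge0}\mathfrak{m}^i/\mathfrak{m}^{i+1}$ is the associated graded ring and $\mathfrak{m}^*=\bigoplus_{i\ge1}\mathfrak{m}^i/\mathfrak{m}^{i+1}$. A minimal free resolution $\mathbf{F}:\cdots\to F_n\xrightarrow{\partial_n}F_{n-1}\to\cdots\to F_0\to0$ consists of finitely generated free modules with $\partial(F_i)\subseteq\mathfrak{m}F_{i-1}$. The linear part $\operatorname{lin}^R(\mathbf{F})$ is the associated graded complex of the filtration $(\mathfrak{F}^p\mathbf{F})_i=\mathfrak{m}^{p-i}F_i$ ($\mathfrak{m}^j=R$ for $j\le0$); it is a complex of graded free $R^{\mathsf g}$-modules with $\operatorname{lin}^R_n(\mathbf{F})=F_n^{\mathsf g}(-n)$, $F_n^{\mathsf g}=\bigoplus_{i\ge0}\mathfrak{m}^iF_n/\mathfrak{m}^{i+1}F_n$, and differential sending the class of $x\in\mathfrak{m}^iF_n$ to the class of $\partial(x)$ in $\mathfrak{m}^{i+1}F_{n-1}/\mathfrak{m}^{i+2}F_{n-1}$. *)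

(* Defs.v *)
From HB Require Import structures.
From mathcomp Require Import all_boot all_order all_algebra.
Set Implicit Arguments. Unset Strict Implicit. Unset Printing Implicit Defensive.
Import GRing.Theory.
Local Open Scope ring_scope.

Section CommAlg.
Variable R : comNzRingType.

Inductive idgen (S : R -> Prop) : R -> Prop :=
| idgen_gen x : S x -> idgen S x
| idgen0 : idgen S 0
| idgenD x y : idgen S x -> idgen S y -> idgen S (x + y)
| idgenM r x : idgen S x -> idgen S (r * x).

Definition is_ideal (I : R -> Prop) : Prop :=
  I 0 /\ (forall x y, I x -> I y -> I (x + y)) /\ (forall r x, I x -> I (r * x)).

Definition maximal_ideal (I : R -> Prop) : Prop :=
  is_ideal I /\ ~ I 1 /\
  (forall J, is_ideal J -> ~ J 1 -> (forall x, I x -> J x) -> forall x, J x -> I x).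

Definition local_ring (m : R -> Prop) : Prop :=
  maximal_ideal m /\ (forall M, maximal_ideal M -> forall x, M x <-> m x).

Definition noetherian : Prop :=
  forall I, is_ideal I -> exists s : seq R, forall x, I x <-> idgen (fun y => y \in s) x.

Fixpoint mpow (m : R -> Prop) (i : nat) : R -> Prop :=
  match i with
  | 0 => fun _ => True
  | i'.+1 => idgen (fun z => exists a c, m a /\ mpow m i' c /\ z = a * c)
  end.

Definition mx_in (I : R -> Prop) p q (A : 'M[R]_(p, q)) : Prop :=
  forall i j, I (A i j).

(* A free resolution  ... -> F_{n+1} --d n--> F_n -> ... -> F_0  with
   F_n = R^(b n) (row vectors, maps act by right multiplication: v |-> v *m d n),
   so d n represents \partial_{n+1}. *)
Definition is_min_free_resolution_of_residue (m : R -> Prop) (b : nat -> nat)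
    (d : forall n, 'M[R]_(b n.+1, b n)) : Prop :=
  (forall n, d n.+1 *m d n = 0) /\
  (forall n (v : 'rV[R]_(b n.+1)), v *m d n = 0 -> exists u, v = u *m d n.+1) /\
  (* H_0 = coker(d 0) is isomorphic to k = R/m: an R-linear augmentation
     F_0 -> R/m (given by a column e, reduced mod m) that is onto, with kernel im(d 0) *)
  (exists e : 'cV[R]_(b 0),
     (forall r : R, exists v : 'rV[R]_(b 0), m ((v *m e) 0 0 - r)) /\
     (forall v : 'rV[R]_(b 0), m ((v *m e) 0 0) <-> exists u, v = u *m d 0)) /\
  (forall n, mx_in m (d n)).

(* x in m^i F_n represents a homogeneous element of lin_n(F) = F_n^g(-n)
   (internal component m^i F_n / m^(i+1) F_n); it is a cycle of lin(F) iff
   \partial_n(x) lies in m^(i+2) F_(n-1) (no condition for n = 0). *)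
Definition lin_cycle (m : R -> Prop) (b : nat -> nat)
    (d : forall n, 'M[R]_(b n.+1, b n)) (n i : nat) : 'rV[R]_(b n) -> Prop :=
  match n return 'rV[R]_(b n) -> Prop with
  | 0 => fun _ => True
  | n'.+1 => fun x => mx_in (mpow m (i + 2)) (x *m d n')
  end.

End CommAlg.
Arguments is_min_free_resolution_of_residue {R} m b d.
Arguments lin_cycle {R} m b d n i _.

(* Main.v *)
Require Import Defs.
From mathcomp Require Import all_boot all_order all_algebra.
From mathcomp Require Import zify.
Set Implicit Arguments. Unset Strict Implicit.
Import GRing.Theory.
Local Open Scope ring_scope.

Section Aux.
Variable R : comNzRingType.

Lemma idgen_ideal (S : R -> Prop) : is_ideal (idgen S).
Proof. split; [exact: idgen0|split; [exact: idgenD|exact: idgenM]]. Qed.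

Lemma mpow_ideal (m : R -> Prop) k : is_ideal (mpow m k).
Proof. case: k => [|k] /=; first by split. exact: idgen_ideal. Qed.

Lemma ideal_opp (I : R -> Prop) x : is_ideal I -> I x -> I (- x).
Proof. move=> [_ [_ HM]] Hx; rewrite -mulN1r; exact: HM. Qed.

Lemma ideal_mulr (I : R -> Prop) x r : is_ideal I -> I x -> I (x * r).
Proof. move=> [_ [_ HM]] Hx; rewrite mulrC; exact: HM. Qed.

Lemma mpow_mul (m : R -> Prop) p q a c :
  mpow m p a -> mpow m q c -> mpow m (p + q) (a * c).
Proof.
elim: p a => [|p IH] a /=.
  move=> _ Hc; rewrite add0n; have [_ [_ HM]] := mpow_ideal m q; exact: HM.
move=> Ha Hc; change (idgen (fun z => exists a0 c0, m a0 /\ mpow m (p + q) c0 /\ z = a0 * c0) (a * c)).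
elim: Ha => [z [a1 [c1 [Ha1 [Hc1 ->]]]]| |x y _ Hx _ Hy| r x _ Hx].
- apply: idgen_gen; exists a1, (c1 * c); split => //; split; last by rewrite mulrA.
  exact: IH.
- rewrite mul0r; exact: idgen0.
- rewrite mulrDl; exact: idgenD.
- rewrite -mulrA; exact: idgenM.
Qed.

Lemma mx_in0 (I : R -> Prop) p q : is_ideal I -> mx_in I (0 : 'M_(p, q)).
Proof. by move=> [H0 _] i j; rewrite mxE. Qed.

Lemma mx_inD (I : R -> Prop) p q (A B : 'M_(p, q)) :
  is_ideal I -> mx_in I A -> mx_in I B -> mx_in I (A + B).
Proof. by move=> [_ [HD _]] HA HB i j; rewrite mxE; apply: HD. Qed.

Lemma mx_inZ (I : R -> Prop) p q c (A : 'M_(p, q)) :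
  is_ideal I -> mx_in I A -> mx_in I (c *: A).
Proof. by move=> [_ [_ HM]] HA i j; rewrite mxE; apply: HM. Qed.

Lemma mx_inB (I : R -> Prop) p q (A B : 'M_(p, q)) :
  is_ideal I -> mx_in I A -> mx_in I B -> mx_in I (A - B).
Proof.
move=> HI HA HB; apply: mx_inD => // i j; rewrite mxE; apply: ideal_opp => //.
Qed.

Lemma mx_inM (I : R -> Prop) p q s (A : 'M_(p, q)) (B : 'M_(q, s)) :
  is_ideal I -> mx_in I A -> mx_in I (A *m B).
Proof.
move=> HI HA i j; rewrite mxE; apply: (big_ind I).
- by case: HI.
- by move=> x y; case: HI => _ [HD _]; apply: HD.
- by move=> k _; apply: ideal_mulr.
Qed.

Lemma mx_in_mpowZ (m : R -> Prop) p q c s t (A : 'M_(s, t)) :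
  mpow m p c -> mx_in (mpow m q) A -> mx_in (mpow m (p + q)) (c *: A).
Proof. by move=> Hc HA i j; rewrite mxE; apply: mpow_mul. Qed.

Lemma lift_rows p n k (D : 'M[R]_(n, k)) (T : 'M_(p, k)) :
  (forall i, exists u, row i T = u *m D) -> exists U, U *m D = T.
Proof.
move=> H; have [f Hf] := fin_all_exists H.
exists (\matrix_i f i); apply/row_matrixP => i.
by rewrite row_mul rowK Hf.
Qed.

End Aux.

Section Main.
Variable R : comNzRingType.
Variable m : R -> Prop.
Variable b : nat -> nat.
Variable d : forall n, 'M[R]_(b n.+1, b n).
Hypothesis Hm : is_ideal m.
Hypothesis Hres : is_min_free_resolution_of_residue m b d.

Lemma lift_ker n p (T : 'M_(p, b n.+1)) :
  T *m d n = 0 -> exists U, U *m d n.+1 = T.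
Proof.
move=> HT; apply: lift_rows => i.
have [_ [Hex _]] := Hres; apply: Hex.
by rewrite -row_mul HT; apply/rowP => j; rewrite !mxE.
Qed.

Variable r : R.
Hypothesis Hr : m r.

Lemma hom0 : exists S : 'M_(b 0, b 1), S *m d 0 = r%:M.
Proof.
apply: lift_rows => i.
have [_ [_ [[e [_ He]] _]]] := Hres.
apply/He.
rewrite -row_mul mul_scalar_mx !mxE.
apply: ideal_mulr => //.
Qed.

Lemma homS n : exists (S : 'M_(b n, b n.+1)) (U : 'M_(b n.+1, b n.+2)),
  U *m d n.+1 = r%:M - d n *m S.
Proof.
elim: n => [|n [S [U HU]]].
  have [S HS] := hom0; exists S; apply: lift_ker.
  by rewrite mulmxBl -mulmxA HS mul_scalar_mx mul_mx_scalar subrr.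
exists U; apply: lift_ker.
have [Hc _] := Hres.
rewrite mulmxBl -mulmxA HU mulmxBr mulmxA Hc mul0mx subr0.
by rewrite mul_scalar_mx mul_mx_scalar subrr.
Qed.

Lemma key n k (x : 'rV[R]_(b n)) :
  mx_in (mpow m k) x -> lin_cycle m b d n k x ->
  exists y, mx_in (mpow m k) y /\ mx_in (mpow m (k + 2)) (r *: x - y *m d n).
Proof.
case: n x => [|n] x Hx Hl.
  have [S HS] := hom0; exists (x *m S); split.
    by apply: mx_inM => //; apply: mpow_ideal.
  rewrite -mulmxA HS mul_mx_scalar subrr; apply: mx_in0; exact: mpow_ideal.
have [S [U HU]] := homS n; exists (x *m U); split.
  by apply: mx_inM => //; apply: mpow_ideal.
rewrite -mulmxA HU mulmxBr mul_mx_scalar opprB addrC subrK mulmxA.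
apply: mx_inM => //; exact: mpow_ideal.
Qed.

End Main.

Theorem corollary2p5 (R : comNzRingType) (m : R -> Prop) (b : nat -> nat)
    (d : forall n, 'M[R]_(b n.+1, b n)) :
  noetherian R -> local_ring m -> is_min_free_resolution_of_residue m b d ->
  forall (n i j : nat) (a : R) (x : 'rV[R]_(b n)),
    (0 < j)%N -> mpow m j a -> mx_in (mpow m i) x -> lin_cycle m b d n i x ->
    exists y : 'rV[R]_(b n.+1),
      mx_in (mpow m (i + j - 1)) y /\
      mx_in (mpow m (i + j + 1)) (a *: x - y *m d n).
Proof.
move=> _ [[Hm _] _] Hres n i [//|j] a x _ /= Ha Hx Hl.
have E1 : (i + j.+1 - 1 = i + j)%N by lia.
have E2 : (i + j.+1 + 1 = i + j + 2)%N by lia.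
rewrite E1 E2.
have HI := mpow_ideal m (i + j + 2).
have HI' := mpow_ideal m (i + j).
elim: Ha => [z [a1 [c [Ha1 [Hc ->]]]]| |a' a'' _ [y1 [Hy1 H1]] _ [y2 [Hy2 H2]]
            | s a' _ [y [Hy H]]].
- have Hx' : mx_in (mpow m (i + j)) (c *: x).
    by rewrite addnC; apply: mx_in_mpowZ.
  have Hl' : lin_cycle m b d n (i + j) (c *: x).
    case: n x Hx Hl Hx' => [//|n] x Hx Hl Hx' /=.
    rewrite -scalemxAl.
    have -> : (i + j + 2 = j + (i + 2))%N by lia.
    exact: mx_in_mpowZ.
  have [y [Hy H]] := key Hm Hres Ha1 Hx' Hl'.
  by exists y; split => //; rewrite -scalerA.
- exists 0; split; first exact: mx_in0.
  by rewrite scale0r mul0mx subrr; apply: mx_in0.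
- exists (y1 + y2); split; first exact: mx_inD.
  have -> : (a' + a'') *: x - (y1 + y2) *m d n
           = (a' *: x - y1 *m d n) + (a'' *: x - y2 *m d n).
    by rewrite scalerDl mulmxDl opprD addrACA.
  exact: mx_inD.
- exists (s *: y); split; first exact: mx_inZ.
  by rewrite -scalerA -scalemxAl -scalerBr; apply: mx_inZ.
Qed.
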